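(* Let $f:[0,\infty)\to[0,\infty)$ be convex with $f(1)=f'(1)=0$, and suppose there exists $c>1$ such that $\frac{f(M)}{M^2}\le\frac{f(t)}{t^2}$ for all $M\ge t\ge c$. Then for any probability measures $\mu,\nu$ on a measurable space $\mathcal X$ with $\nu\ll\mu$ and any $M\ge c$ with $f(M)>0$, $$\frac{\mathrm{ICov}_M(\nu\|\mu)}{M}\le\frac{c^2}{M}+\frac{M\cdot D_f(\nu\|\mu)}{f(M)}.$$
   Context: $\mathrm{Cov}_t(\nu\|\mu)=\nu(\{x:\frac{d\nu}{d\mu}(x)\ge t\})$, $\mathrm{ICov}_M(\nu\|\mu)=\int_0^M\mathrm{Cov}_t(\nu\|\mu)\,dt$, and $D_f(\nu\|\mu)=\mathbb E_{X\sim\mu}[f(\frac{d\nu}{d\mu}(X))]$. *)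

(* Defs.v *)
From HB Require Import structures.
From mathcomp Require Import all_boot all_order all_algebra.
From mathcomp Require Import all_classical all_reals all_analysis.
Set Implicit Arguments. Unset Strict Implicit. Unset Printing Implicit Defensive.
Import Order.TTheory GRing.Theory Num.Theory.
Local Open Scope classical_set_scope.
Local Open Scope ring_scope.
Local Open Scope ereal_scope.

(* Radon-Nikodym derivative dnu/dmu (library notion, extended-real valued,
   finite everywhere when nu << mu). *)
Definition rnd d (T : measurableType d) (R : realType)
  (nu mu : probability T R) : T -> \bar R :=
  Radon_Nikodym (charge_of_finite_measure nu) mu.

Definition Cov d (T : measurableType d) (R : realType)
  (nu mu : probability T R) (t : R) : \bar R :=
  nu [set x | t%:E <= rnd nu mu x].

Definition ICov d (T : measurableType d) (R : realType)
  (nu mu : probability T R) (M : R) : \bar R :=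
  \int[lebesgue_measure]_(t in `[0%R, M]) Cov nu mu t.

Definition Df d (T : measurableType d) (R : realType) (f : R -> R)
  (nu mu : probability T R) : \bar R :=
  \int[mu]_x (f (fine (rnd nu mu x)))%:E.

(* Main.v *)
Require Import Defs.
From HB Require Import structures.
From mathcomp Require Import all_boot all_order all_algebra.
From mathcomp Require Import all_classical all_reals all_analysis.
From mathcomp Require Import ring lra measurable_realfun.
Import Order.TTheory GRing.Theory Num.Theory.
Local Open Scope classical_set_scope.
Local Open Scope ring_scope.

Lemma le_int_nm d (T : measurableType d) (R : realType)
  (m : {measure set T -> \bar R}) (f1 f2 : T -> \bar R) :
  (forall x, (0 <= f1 x)%E) -> (forall x, (f1 x <= f2 x)%E) ->
  (\int[m]_x f1 x <= \int[m]_x f2 x)%E.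
Proof.
move=> f10 f12; rewrite !ge0_integralTE //; last first.
  by move=> x; exact: le_trans (f10 x) (f12 x).
apply: ereal_sup_le => _ [h hf <-]; exists h => //= x.
exact: le_trans (hf x) (f12 x).
Qed.

Lemma convex_ratio (R : realType) (f : R -> R)
  (f_ge0 : forall x : R, 0 <= x -> 0 <= f x)
  (f_convex : forall (x y l : R), 0 <= x -> 0 <= y -> 0 <= l -> l <= 1 ->
     f (l * x + (1 - l) * y) <= l * f x + (1 - l) * f y)
  (f1 : f 1 = 0) (M y : R) : 1 < M -> M <= y -> f M * y <= M * f y.
Proof.
move=> M1 My; have [->|My'] := eqVneq M y; first by rewrite mulrC.
have lt_My : M < y by rewrite lt_neqAle My' My.
have y1 : 0 < y - 1 by lra.
pose l := (M - 1) / (y - 1).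
have l0 : 0 <= l by rewrite divr_ge0 //; lra.
have l1 : l <= 1 by rewrite ler_pdivrMr //; lra.
have := f_convex y 1 l ltac:(lra) ltac:(lra) l0 l1.
have -> : l * y + (1 - l) * 1 = M.
  rewrite /l; field; lra.
rewrite f1 mulr0 addr0 => hM.
have fy0 : 0 <= f y by apply: f_ge0; lra.
have : f M * (y - 1) <= (M - 1) * f y.
  by move: hM; rewrite /l mulrAC ler_pdivlMr.
nra.
Qed.

Lemma pointwise (R : realType) (f : R -> R) (c : R)
  (f_ge0 : forall x : R, 0 <= x -> 0 <= f x)
  (f_convex : forall (x y l : R), 0 <= x -> 0 <= y -> 0 <= l -> l <= 1 ->
     f (l * x + (1 - l) * y) <= l * f x + (1 - l) * f y)
  (f1 : f 1 = 0) (c_gt1 : 1 < c)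
  (hc : forall M t : R, c <= t -> t <= M -> f M / M ^+ 2 <= f t / t ^+ 2)
  (M : R) (cM : c <= M) (fM : 0 < f M) (u : R) : 0 <= u ->
  Num.min (Num.max u 0) M * u - c ^+ 2 <= (M ^+ 2 / f M) * f u.
Proof.
move=> u0; rewrite (max_idPl u0).
have fu0 := f_ge0 u u0.
have K0 : 0 <= M ^+ 2 / f M by rewrite divr_ge0 // ?sqr_ge0 // ltW.
have Kfu : 0 <= M ^+ 2 / f M * f u by rewrite mulr_ge0.
have [uM|Mu] := leP u M.
  idtac.
  have [uc|cu] := leP u c.
    apply: le_trans Kfu; nra.
  have := hc M u (ltW cu) uM.
  have u0' : 0 < u by lra.
  have M0 : 0 < M by lra.
  rewrite ler_pdivrMr ?exprn_gt0 // mulrAC ler_pdivlMr ?exprn_gt0 // => H.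
  rewrite mulrAC ler_pdivlMr //. 
  nra.
idtac.
have := @convex_ratio _ _ f_ge0 f_convex f1 M u (lt_le_trans c_gt1 cM) (ltW Mu).
rewrite mulrAC ler_pdivlMr // => H.
have M0 : 0 < M by lra.
nra.
Qed.

Theorem lemma24 (R : realType) (f : R -> R) (c : R)
  (f_ge0 : forall x : R, 0 <= x -> 0 <= f x)
  (f_convex : forall (x y l : R), 0 <= x -> 0 <= y -> 0 <= l -> l <= 1 ->
     f (l * x + (1 - l) * y) <= l * f x + (1 - l) * f y)
  (f1 : f 1 = 0)
  (f'1 : is_derive (1 : R) (1 : R) f (0 : R))
  (c_gt1 : 1 < c)
  (hc : forall M t : R, c <= t -> t <= M -> f M / M ^+ 2 <= f t / t ^+ 2)
  (d : measure_display) (T : measurableType d) (nu mu : probability T R)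
  (numu : nu `<< mu) (M : R) (cM : c <= M) (fM : 0 < f M) :
  (ICov nu mu M * (M^-1)%:E <= (c ^+ 2 / M)%:E + (M / f M)%:E * Df f nu mu)%E.
Proof.
have numu' : charge_of_finite_measure nu `<< mu by exact: numu.
set rn := rnd nu mu.
have rnfin x : rn x \is a fin_num by exact: Radon_Nikodym_fin_num.
have mrn : measurable_fun [set: T] (rn : T -> \bar R).
  exact: measurable_int (Radon_Nikodym_integrable numu').
pose g := fun x => fine (rn x).
have rng x : rn x = (g x)%:E by rewrite /g fineK.
have mg : measurable_fun setT g.
  exact: measurableT_comp (fine_measurable measurableT) mrn.
pose h := fun x => Num.min (Num.max (g x) 0) M.
have mh : measurable_fun setT h.
  apply: measurable_minr; last exact: measurable_cst.
  apply: measurable_maxr => //; exact: measurable_cst.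
have M0 : 0 < M by lra.
have h0 x : 0 <= h x by rewrite /h le_min le_max lexx orbT ltW.
have hle x : h x <= M by rewrite /h ge_min lexx orbT.
have stepA : (ICov nu mu M <= \int[nu]_x (h x)%:E)%E.
  apply/lee_addgt0Pr => e e0.
  pose X := fun x => h x + e.
  have mX : measurable_fun setT X.
    by apply: measurable_funD => //; exact: measurable_cst.
  have mXin : X \in mfun by rewrite inE.
  pose XX : {RV nu >-> R} := mfun_Sub mXin.
  have XXE : (XX : T -> R) = X := mfun_valP mXin.
  have XX0 : forall x, 0 <= XX x.
    by move=> x; rewrite XXE /X addr_ge0 // ltW.
  have -> : (\int[nu]_x (h x)%:E + e%:E = \int[nu]_x (XX x)%:E)%E.
    rewrite XXE /X.
    under [RHS]eq_integral do rewrite EFinD.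
    rewrite ge0_integralD //; try (by move=> x _; rewrite lee_fin ?h0 ?ltW);
      try exact/measurable_EFinP.
    congr (_ + _)%E.
    have -> : (\int[nu]_x e%:E = \int[nu]_x (cst e%:E) x)%E by [].
    by rewrite integral_cst // [X in (_ * X)%E](_ : _ = 1%E) ?mule1 //; exact: probability_setT.
  rewrite (_ : (\int[nu]_x (XX x)%:E = \int[lebesgue_measure]_(r in `[0%R, +oo[) ccdf XX r)%E); last by rewrite -expectation_def; exact: ge0_expectation_ccdf.
  rewrite /ICov integral_mkcond [X in (_ <= X)%E]integral_mkcond.
  apply: le_int_nm.
    move=> t; rewrite patchE; case: ifP => // _; exact: measure_ge0.
  move=> t; rewrite !patchE; case: ifPn => tin; last first.
    by case: ifP => _ //; exact: measure_ge0.
  move: (tin); rewrite inE /= in_itv /= => /andP[t0 tM].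
  rewrite ifT; last by rewrite inE /= in_itv /= t0.
  rewrite /Cov /ccdf /distribution /pushforward.
  apply: le_measure; rewrite ?inE.
  - rewrite -[X in measurable X]setTI; apply: measurable_lee => //; exact: measurable_cst.
  - rewrite XXE -[X in measurable X]setTI; apply: mX => //.
  - move=> x /=; rewrite -/rn rng lee_fin => tx.
    rewrite /X in_itv /= andbT.
    have : t <= h x by rewrite /h le_min le_max tx tM.
    lra.
have stepB : (\int[nu]_x (h x)%:E = \int[mu]_x ((h x)%:E * rn x))%E.
  rewrite /rn /rnd Radon_Nikodym_change_of_variables //.
  apply: (@le_integrable _ _ _ nu _ measurableT _ (EFin \o cst M)).
  - exact/measurable_EFinP.
  - by move=> x _ /=; rewrite lee_fin !ger0_norm // ltW.
  - exact: finite_measure_integrable_cst.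
pose K := M ^+ 2 / f M.
have K0 : 0 < K by rewrite divr_gt0 // exprn_gt0.
pose phi := fun x => (Num.max (h x * g x - c ^+ 2) 0 / K)%:E.
have hg0 x : 0 <= h x * g x.
  rewrite /h; have [g0|g0] := leP 0 (g x).
    by rewrite mulr_ge0 // le_min g0 ltW.
  by rewrite (min_idPl (ltW M0)) mul0r.
pose m := fun x => Num.max (h x * g x - c ^+ 2) 0.
have mm : measurable_fun setT m.
  apply: measurable_maxr; last exact: measurable_cst.
  apply: measurable_funB; last exact: measurable_cst.
  exact: measurable_funM.
have m0 x : 0 <= m x by rewrite /m le_max lexx orbT.
have mphi : measurable_fun setT phi.
  apply/measurable_EFinP; apply: measurable_funM => //; exact: measurable_cst.
have stepC : (\int[mu]_x ((h x)%:E * rn x) <= (c ^+ 2)%:E + K%:E * \int[mu]_x phi x)%E.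
  under eq_integral do rewrite rng -EFinM.
  have -> : (K%:E * \int[mu]_x phi x = \int[mu]_x (m x)%:E)%E.
    rewrite -ge0_integralZl //; last by rewrite lee_fin ltW.
      apply: eq_integral => x _; rewrite -EFinM; congr EFin.
      by rewrite /m mulrC divfK // gt_eqF.
    by move=> x _; rewrite /phi lee_fin divr_ge0 ?le_max ?lexx ?orbT // ltW.
  have -> : ((c ^+ 2)%:E = \int[mu]_x (cst (c ^+ 2)%:E) x)%E.
    by rewrite integral_cst // [X in (_ * X)%E](_ : _ = 1%E) ?mule1 //; exact: probability_setT.
  rewrite -ge0_integralD //; last 2 first.
  - by move=> x _; rewrite lee_fin.
  - by apply/measurable_EFinP.
  apply: ge0_le_integral => //.
  - by move=> x _; rewrite lee_fin.
  - by apply/measurable_EFinP; exact: measurable_funM.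
  - apply: emeasurable_funD; first exact: measurable_cst.
    exact/measurable_EFinP.
  move=> x _; rewrite /= -EFinD lee_fin.
  have : h x * g x - c ^+ 2 <= m x by rewrite /m le_max lexx.
  lra.
  by move=> x _; rewrite /= lee_fin sqr_ge0.
have stepD : (\int[mu]_x phi x <= Df f nu mu)%E.
  have -> : Df f nu mu = (\int[mu]_x (f (g x))%:E)%E by [].
  have Fneg : (\int[mu]_x ((fun x => (f (g x))%:E)^\- x) = 0)%E.
    have [N [mN N0 subN]] := ae_eq_Radon_Nikodym_SigmaFinite numu measurableT.
    apply/eqP; rewrite eq_le integral_ge0 ?andbT; last by move=> x _; exact: funeneg_ge0.
    apply: (le_trans (@le_int_nm _ _ _ mu _ (fun x => (+oo * (\1_N x)%:E)%E) _ _)).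
    - by move=> x; exact: funeneg_ge0.
    - move=> x; have [xN|xN] := pselect (N x).
        by rewrite indicE mem_set // mule1 leey.
      have e : Radon_Nikodym_SigmaFinite.f nu mu x = rn x.
        apply: contrapT => ne; apply: xN; apply: subN => /=.
        by move=> /(_ I).
      have gx0 : 0 <= g x.
        rewrite /g -e fine_ge0 //; exact: Radon_Nikodym_SigmaFinite.f_ge0.
      rewrite funenegE (max_idPr _) ?indicE ?memNset ?mule0 //.
      by rewrite -EFinN lee_fin oppr_le0 f_ge0.
    rewrite ge0_integralZl //.
    + by rewrite integral_indic // setIT N0 mule0.
    + by apply/measurable_EFinP; exact: measurable_indic.
  rewrite [X in (_ <= X)%E]integralE Fneg sube0.
  apply: le_int_nm.
    by move=> x; rewrite /phi lee_fin divr_ge0 ?le_max ?lexx ?orbT // ltW.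
  move=> x; rewrite funeposE le_max; apply/orP.
  rewrite /phi /h; have [gx|gx] := leP 0 (g x).
    left; rewrite lee_fin ler_pdivrMr // ge_max; apply/andP; split.
      have := @pointwise _ f c f_ge0 f_convex f1 c_gt1 hc M cM fM (g x) gx.
      by rewrite (max_idPl gx) [_ * f _]mulrC.
    by rewrite mulr_ge0 ?f_ge0 // ltW.
  right; rewrite (min_idPl (ltW M0)) mul0r sub0r (max_idPr _) ?mul0r // lerNl oppr0 sqr_ge0.
  by []. have Df0 : (0 <= Df f nu mu)%E.
  apply: le_trans stepD; apply: integral_ge0 => x _.
  by rewrite lee_fin divr_ge0 ?le_max ?lexx ?orbT // ltW.
have H1 : (ICov nu mu M <= (c ^+ 2)%:E + K%:E * Df f nu mu)%E.
  apply: (le_trans stepA); rewrite stepB; apply: (le_trans stepC).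
  by rewrite leeD2l // lee_wpmul2l // lee_fin ltW.
have Mi0 : (0 <= (M^-1)%:E)%E by rewrite lee_fin invr_ge0 ltW.
apply: (le_trans (lee_wpmul2r Mi0 H1)).
rewrite muleDl // -EFinM (muleC K%:E) -muleA -EFinM.
have -> : K * M^-1 = M / f M.
  rewrite /K; field; apply/andP; split; apply/eqP; lra.
by rewrite muleC.
Qed.
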